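(* Let $X_0,Y_0$ be $\mathbb Z_+$-valued random variables with $\mathbf P(X_0=k)\ge\mathbf P(Y_0=k)$ for all integers $k\ge1$ and $\mathbf P(Y_0=0)>0$, coupled as in the $XY$-coupling described below, and let $\eta>0$. If $\mathbf E(X_0)<\infty$ and $\mathbf E(X_0-Y_0)\ge\eta\,\mathbf P(Y_0=0)$, then for all real $r\ge0$, all integers $n\ge0$, $k\ge0$ and all integers $\ell\in[0,\frac{r\eta}2]$, $$\mathbf E(X_{n+k+\ell})\ge\frac{m^{k+\ell}\eta}{2}\,\mathbf E\big[N_n^{(0)}\mathbf 1_{\{N_n^{(0)}\ge r\}}\mathbf 1_{\{Y_n=k\}}\big].$$
   Context: Fix an integer $m\ge2$. Reversed $m$-ary tree $\mathbb T$: vertices have generations $|x|\in\{0,1,2,\dots\}$; each vertex $x$ with $|x|\ge1$ has $m$ parents $x^{(1)},\dots,x^{(m)}$ in generation $|x|-1$, and each vertex has a unique child in the next generation. $XY$-coupling: couple $(X_0,Y_0)$ so that $X_0\ge Y_0$ a.s. and $\mathbf P(X_0=Y_0\mid Y_0>0)=1$ (possible under the hypotheses). Let $(X(x),Y(x))$, $|x|=0$, be i.i.d. copies of this pair, and for $|x|\ge1$ set $X(x):=(X(x^{(1)})+\cdots+X(x^{(m)})-1)^+$, $Y(x):=(Y(x^{(1)})+\cdots+Y(x^{(m)})-1)^+$. Then $X(x)\ge Y(x)$ for all $x$, and for $|x|=n$ the variables $X(x)$ (resp. $Y(x)$) have the law of the $n$-th term $X_n$ (resp. $Y_n$) of the recursive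 system $Z_{n+1}\overset{d}=(Z_{n,1}+\cdots+Z_{n,m}-1)^+$ started from $X_0$ (resp. $Y_0$). Open paths: a path leading to $x$ is $(x_0,\dots,x_{|x|}=x)$ with $|x_j|=j$ and $x_{j+1}$ the child of $x_j$; it is open if for every vertex $z$ on it with $|z|\ge1$, $Y(z^{(1)})+\cdots+Y(z^{(m)})\ge1$ (a path with $|x|=0$ is open). $N^{(i)}(x)$ is the number of open paths leading to $x$ with $Y(x_0)=i$. Let $\mathfrak e_n$ be a fixed vertex of generation $n$ (the first in lexicographic order, with $\mathfrak e_{n+1}$ the child of $\mathfrak e_n$), and set $N_n^{(0)}:=N^{(0)}(\mathfrak e_n)$, $Y_n:=Y(\mathfrak e_n)$, and $X_n:=X(\mathfrak e_n)$. *)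

(* Defs.v *)
From Stdlib Require Import Reals Arith.
Open Scope R_scope.

Fixpoint sum_nat (n : nat) (g : nat -> nat) : nat :=
  match n with O => O | S n' => (sum_nat n' g + g n')%nat end.

Fixpoint sum_R (n : nat) (g : nat -> R) : R :=
  match n with O => 0 | S n' => sum_R n' g + g n' end.

(* Value at a generation-n vertex of the reversed m-ary tree, whose m^n
   generation-0 ancestors carry the values v 0, ..., v (m^n - 1)
   (the ancestors through parent i occupy the block [i*m^(n-1), (i+1)*m^(n-1))).
   Recursion Z(x) = (Z(x^(1)) + ... + Z(x^(m)) - 1)^+ (nat truncated subtraction). *)
Fixpoint rec_val (m n : nat) (v : nat -> nat) : nat :=
  match n with
  | O => v O
  | S n' => (sum_nat m (fun i => rec_val m n' (fun j => v (i * Nat.pow m n' + j)%nat)) - 1)%nat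
  end.

(* N^{(0)} at a generation-n vertex: number of open paths leading to it that
   start at a generation-0 vertex with Y = 0, where y gives the Y-values of
   the generation-0 ancestors. *)
Fixpoint open_count (m n : nat) (y : nat -> nat) : nat :=
  match n with
  | O => if Nat.eqb (y O) O then 1%nat else 0%nat
  | S n' =>
      if Nat.leb 1 (sum_nat m (fun i => rec_val m n' (fun j => y (i * Nat.pow m n' + j)%nat)))
      then sum_nat m (fun i => open_count m n' (fun j => y (i * Nat.pow m n' + j)%nat))
      else 0%nat
  end.

(* q a b = P(X0 = a, Y0 = b): a probability mass function on nat*nat. *)
Definition is_pmf (q : nat -> nat -> R) : Prop :=
  (forall a b, 0 <= q a b) /\
  Un_cv (fun K => sum_R K (fun a => sum_R K (fun b => q a b))) 1.

(* XY-coupling: X0 >= Y0 a.s. and P(X0 = Y0 | Y0 > 0) = 1. *)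
Definition XY_coupling (q : nat -> nat -> R) : Prop :=
  forall a b, 0 < q a b -> (b <= a)%nat /\ ((0 < b)%nat -> a = b).

(* Truncated expectation of f(w) where w 0, ..., w (N-1) are i.i.d. copies of
   (X0,Y0) with law q, all values restricted to [0,K).  For nonnegative f
   (a.s.) this is nondecreasing in K and E f = sup_K texp q K N f. *)
Fixpoint texp (q : nat -> nat -> R) (K N : nat) (f : (nat -> nat * nat) -> R) : R :=
  match N with
  | O => f (fun _ => (O, O))
  | S N' => sum_R K (fun a => sum_R K (fun b =>
              q a b * texp q K N' (fun w => f (fun i => if Nat.eqb i N' then (a, b) else w i))))
  end.

(* E[f1(N1 iid copies)] <= E[f2(N2 iid copies)] in [0, +oo], for a.s.
   nonnegative f1, f2 (comparison of suprema of truncations). *)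
Definition exp_le (q : nat -> nat -> R) (N1 : nat) (f1 : (nat -> nat * nat) -> R)
  (N2 : nat) (f2 : (nat -> nat * nat) -> R) : Prop :=
  forall K, exists K', texp q K N1 f1 <= texp q K' N2 f2.

Definition indic (b : bool) : R := if b then 1 else 0.

(* Main.v *)
Require Import Defs.
From Stdlib Require Import Reals Arith Lia Lra Psatz FunctionalExtensionality.
Require Import Defs.
Open Scope R_scope.

Lemma sum_R_ext n f g : (forall i, (i < n)%nat -> f i = g i) -> sum_R n f = sum_R n g.
Proof. induction n; simpl; intros H; auto. rewrite IHn by (intros; apply H; lia). rewrite H by lia. auto. Qed.

Lemma sum_R_plus n f g : sum_R n (fun i => f i + g i) = sum_R n f + sum_R n g.
Proof. induction n; simpl; [lra|]. rewrite IHn. lra. Qed.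

Lemma sum_R_scal n c f : sum_R n (fun i => c * f i) = c * sum_R n f.
Proof. induction n; simpl; [lra|]. rewrite IHn. lra. Qed.

Lemma sum_R_le n f g : (forall i, (i < n)%nat -> f i <= g i) -> sum_R n f <= sum_R n g.
Proof. induction n; simpl; intros H; [lra|]. pose proof (H n ltac:(lia)). assert (sum_R n f <= sum_R n g) by (apply IHn; intros; apply H; lia). lra. Qed.

Lemma sum_R_nonneg n f : (forall i, (i < n)%nat -> 0 <= f i) -> 0 <= sum_R n f.
Proof. intros H. replace 0 with (sum_R n (fun _ => 0)). apply sum_R_le; auto.
  induction n; simpl; auto. rewrite IHn; [lra|]. intros; apply H; lia. Qed.

Lemma sum_R_const n c : sum_R n (fun _ => c) = INR n * c.
Proof. induction n; simpl sum_R; [simpl; lra|]. rewrite IHn, S_INR. lra. Qed.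

Lemma sum_R_Kmono n n' f : (n <= n')%nat -> (forall i, 0 <= f i) -> sum_R n f <= sum_R n' f.
Proof. intros H Hf. induction H; [lra|]. simpl. pose proof (Hf m). lra. Qed.

Lemma sum_R_term n f i : (i < n)%nat -> (forall j, (j < n)%nat -> 0 <= f j) -> f i <= sum_R n f.
Proof. induction n; intros Hi H; [lia|]. simpl. destruct (Nat.eq_dec i n).
  - subst. assert (0 <= sum_R n f) by (apply sum_R_nonneg; intros; apply H; lia). lra.
  - assert (f i <= sum_R n f) by (apply IHn; [lia| intros; apply H; lia]). pose proof (H n ltac:(lia)). lra. Qed.

Lemma sum_R_pos n f : 0 < sum_R n f -> exists i, (i < n)%nat /\ 0 < f i.
Proof. induction n; simpl; intros H; [lra|]. destruct (Rlt_dec 0 (f n)).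
  - exists n; split; auto.
  - destruct IHn as [i [Hi Hi']]; [lra|]. exists i; split; auto. Qed.

Lemma sum_R_swap n n' (f : nat -> nat -> R) :
  sum_R n (fun i => sum_R n' (fun j => f i j)) = sum_R n' (fun j => sum_R n (fun i => f i j)).
Proof. induction n; simpl.
  - induction n'; simpl; auto. rewrite <- IHn'. lra.
  - rewrite IHn. rewrite <- sum_R_plus. auto. Qed.

Definition upd (i : nat) (p : nat*nat) (w : nat -> nat*nat) : nat -> nat*nat :=
  fun j => if Nat.eqb j i then p else w j.

Section T.
Variable q : nat -> nat -> R.
Hypothesis qpos : forall a b, 0 <= q a b.

Lemma texp_S K N f : texp q K (S N) f =
  sum_R K (fun a => sum_R K (fun b => q a b * texp q K N (fun w => f (upd N (a,b) w)))).
Proof. reflexivity. Qed.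

Lemma texp_plus K N f g : texp q K N (fun w => f w + g w) = texp q K N f + texp q K N g.
Proof. revert f g; induction N; intros; simpl; auto.
  rewrite <- sum_R_plus. apply sum_R_ext; intros. rewrite <- sum_R_plus. apply sum_R_ext; intros.
  rewrite IHN. lra. Qed.

Lemma texp_scal K N c f : texp q K N (fun w => c * f w) = c * texp q K N f.
Proof. revert f; induction N; intros; simpl; auto.
  rewrite <- sum_R_scal. apply sum_R_ext; intros. rewrite <- sum_R_scal. apply sum_R_ext; intros.
  rewrite IHN. lra. Qed.

Lemma texp_zero K N : texp q K N (fun _ => 0) = 0.
Proof. replace (fun _ : nat -> nat*nat => 0) with (fun w : nat -> nat*nat => 0 * 0) by (apply functional_extensionality; intros; lra).
  rewrite texp_scal. lra. Qed.

Lemma texp_sum K N B (F : nat -> (nat -> nat*nat) -> R) :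
  texp q K N (fun w => sum_R B (fun t => F t w)) = sum_R B (fun t => texp q K N (F t)).
Proof. induction B; simpl. apply texp_zero. rewrite texp_plus, IHB. auto. Qed.

Lemma texp_opp K N f : texp q K N (fun w => - f w) = - texp q K N f.
Proof. replace (fun w => - f w) with (fun w => (-1) * f w) by (apply functional_extensionality; intros; lra).
  rewrite texp_scal. lra. Qed.

Lemma texp_minus K N f g : texp q K N (fun w => f w - g w) = texp q K N f - texp q K N g.
Proof. unfold Rminus. rewrite texp_plus. rewrite texp_opp. auto. Qed.

Lemma texp_mono_supp K N f g :
  (forall w, (forall i, (i < N)%nat -> 0 < q (fst (w i)) (snd (w i))) -> f w <= g w) ->
  texp q K N f <= texp q K N g.
Proof. revert f g; induction N; intros f g H; simpl.
  - apply H. intros; lia.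
  - apply sum_R_le; intros a _. apply sum_R_le; intros b _.
    destruct (qpos a b) as [Hq|Hq].
    + apply Rmult_le_compat_l; [lra|]. apply IHN. intros w Hw. apply H.
      intros i Hi. unfold upd. destruct (Nat.eqb_spec i N); simpl; auto. apply Hw; lia.
    + rewrite <- Hq. lra. Qed.

Lemma texp_mono K N f g : (forall w, f w <= g w) -> texp q K N f <= texp q K N g.
Proof. intros; apply texp_mono_supp; auto. Qed.

Lemma texp_nonneg K N f : (forall w, 0 <= f w) -> 0 <= texp q K N f.
Proof. intros H. rewrite <- (texp_zero K N). apply texp_mono; auto. Qed.

Lemma texp_Kmono K K' N f : (K <= K')%nat -> (forall w, 0 <= f w) -> texp q K N f <= texp q K' N f.
Proof. revert f; induction N; intros f HK H; simpl; [lra|].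
  apply Rle_trans with (sum_R K' (fun a => sum_R K (fun b => q a b * texp q K N (fun w => f (upd N (a, b) w))))).
  - apply sum_R_Kmono; auto. intros. apply sum_R_nonneg. intros. apply Rmult_le_pos; auto. apply texp_nonneg; auto.
  - apply sum_R_le; intros. apply Rle_trans with (sum_R K' (fun b => q i b * texp q K N (fun w => f (upd N (i, b) w)))).
    + apply sum_R_Kmono; auto. intros. apply Rmult_le_pos; auto. apply texp_nonneg; auto.
    + apply sum_R_le; intros. apply Rmult_le_compat_l; auto. Qed.

Lemma texp_local K N f g : (forall w, (forall i, (N <= i)%nat -> w i = (0,0)%nat) -> f w = g w) ->
  texp q K N f = texp q K N g.
Proof. revert f g; induction N; intros f g H; simpl.
  - apply H; auto.
  - apply sum_R_ext; intros. apply sum_R_ext; intros. f_equal. apply IHN. intros w Hw. apply H.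
    intros j Hj. unfold upd. destruct (Nat.eqb_spec j N); [lia|]. apply Hw; lia. Qed.

Definition SS K := texp q K 1 (fun _ => 1).

Lemma texp_const K N c : texp q K N (fun _ => c) = SS K ^ N * c.
Proof. induction N; [simpl; lra|]. rewrite texp_S.
  transitivity (sum_R K (fun a => sum_R K (fun b => q a b * 1)) * (SS K ^ N * c)).
  - rewrite Rmult_comm, <- sum_R_scal. apply sum_R_ext; intros. rewrite <- sum_R_scal. apply sum_R_ext; intros.
    rewrite IHN. lra.
  - unfold SS. simpl. lra. Qed.

Lemma texp_pos K N f g : 0 < texp q K N f -> (forall w, 0 < f w -> 0 < g w) -> (forall w, 0 <= g w) ->
  0 < texp q K N g.
Proof. revert f g; induction N; intros f g H1 H2 H3; [simpl in *; auto|]. rewrite texp_S in H1 |- *.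
  apply sum_R_pos in H1 as [a [Ha H1]]. apply sum_R_pos in H1 as [b [Hb H1]].
  assert (0 < q a b /\ 0 < texp q K N (fun w => f (upd N (a,b) w))) as [Hq Ht].
  { destruct (qpos a b) as [Hq|Hq]; [|rewrite <- Hq in H1; lra]. split; auto.
    destruct (Rlt_dec 0 (texp q K N (fun w => f (upd N (a,b) w)))); auto. nra. }
  assert (0 < texp q K N (fun w => g (upd N (a,b) w))) by (eapply IHN; eauto).
  eapply Rlt_le_trans; [|apply (sum_R_term _ _ a)]; auto.
  - eapply Rlt_le_trans; [|apply (sum_R_term _ _ b)]; auto. nra.
    intros; apply Rmult_le_pos; auto; apply texp_nonneg; auto.
  - intros; apply sum_R_nonneg; intros; apply Rmult_le_pos; auto; apply texp_nonneg; auto. Qed.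


Definition glue (N1 : nat) (w u : nat -> nat*nat) : nat -> nat*nat :=
  fun i => if Nat.ltb i N1 then w i else u (i - N1)%nat.

Lemma texp_split K N1 N2 f :
  texp q K (N1 + N2) f = texp q K N2 (fun u => texp q K N1 (fun w => f (glue N1 w u))).
Proof. revert f; induction N2; intros f.
  - rewrite Nat.add_0_r. simpl. apply texp_local. intros w Hw. f_equal.
    apply functional_extensionality; intros i. unfold glue. destruct (Nat.ltb_spec i N1); auto.
    
  - rewrite Nat.add_succ_r, !texp_S. apply sum_R_ext; intros a _. apply sum_R_ext; intros b _. f_equal.
    rewrite IHN2. f_equal. apply functional_extensionality; intros u. f_equal.
    apply functional_extensionality; intros w. f_equal.
    apply functional_extensionality; intros i. unfold upd, glue.
    destruct (Nat.ltb_spec i N1); destruct (Nat.eqb_spec i (N1 + N2)); destruct (Nat.eqb_spec (i - N1) N2); auto; lia.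
Qed.

Definition loc (M : nat) (g : (nat -> nat*nat) -> R) :=
  forall u u', (forall j, (j < M)%nat -> u j = u' j) -> g u = g u'.

Lemma texp_block K N M s g : (s + M <= N)%nat -> loc M g ->
  texp q K N (fun w => g (fun j => w (s + j)%nat)) = SS K ^ (N - M) * texp q K M g.
Proof. intros Hs Hg.
  replace N with ((s + M) + (N - s - M))%nat at 1 by lia. rewrite texp_split.
  assert (E : forall u, texp q K (s + M) (fun w => g (fun j => glue (s + M) w u (s + j)%nat)) =
               texp q K (s + M) (fun w => g (fun j => w (s + j)%nat))).
  { intros u. f_equal. apply functional_extensionality; intros w. apply Hg. intros j Hj.
    unfold glue. destruct (Nat.ltb_spec (s + j) (s + M)); auto; lia. }
  transitivity (texp q K (N - s - M) (fun _ => texp q K (s + M) (fun w => g (fun j => w (s + j)%nat)))).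
  { f_equal. apply functional_extensionality; intros u. apply E. }
  rewrite texp_const. rewrite texp_split.
  transitivity (SS K ^ (N - s - M) * texp q K M (fun u => SS K ^ s * g u)).
  { f_equal. f_equal. apply functional_extensionality; intros u.
    rewrite <- texp_const. f_equal. apply functional_extensionality; intros w. f_equal.
    apply functional_extensionality; intros j. unfold glue. destruct (Nat.ltb_spec (s + j) s); [lia|]. f_equal. lia. }
  rewrite texp_scal. rewrite <- Rmult_assoc, <- pow_add. f_equal. f_equal. lia. Qed.

Lemma texp_block2 K N M1 M2 s1 s2 g1 g2 : (s1 + M1 <= s2)%nat -> (s2 + M2 <= N)%nat -> loc M1 g1 -> loc M2 g2 ->
  texp q K N (fun w => g1 (fun j => w (s1 + j)%nat) * g2 (fun j => w (s2 + j)%nat))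
  = SS K ^ (N - M1 - M2) * texp q K M1 g1 * texp q K M2 g2.
Proof. intros H1 H2 Hg1 Hg2.
  replace N with (s2 + (N - s2))%nat at 1 by lia. rewrite texp_split.
  transitivity (texp q K (N - s2) (fun u => (SS K ^ (s2 - M1) * texp q K M1 g1) * g2 (fun j => u (0 + j)%nat))).
  { f_equal. apply functional_extensionality; intros u. rewrite <- (texp_block K s2 M1 s1 g1) by (auto; lia).
    rewrite Rmult_comm, <- texp_scal. f_equal. apply functional_extensionality; intros w. 
    assert (A1 : g1 (fun j => glue s2 w u (s1 + j)%nat) = g1 (fun j => w (s1 + j)%nat)).
    { apply Hg1. intros j Hj. unfold glue. destruct (Nat.ltb_spec (s1 + j) s2); auto; lia. }
    assert (A2 : g2 (fun j => glue s2 w u (s2 + j)%nat) = g2 (fun j => u (0 + j)%nat)).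
    { f_equal. apply functional_extensionality; intros j. unfold glue. destruct (Nat.ltb_spec (s2 + j) s2); [lia|]. f_equal. lia. }
    rewrite A1, A2. ring. }
  rewrite texp_scal. rewrite (texp_block K (N - s2) M2 0 g2) by (auto; lia).
  replace (N - M1 - M2)%nat with ((s2 - M1) + (N - s2 - M2))%nat by lia. rewrite pow_add. ring. Qed.

Lemma texp1 K h : texp q K 1 (fun w => h (w 0%nat)) = sum_R K (fun a => sum_R K (fun b => q a b * h (a,b))).
Proof. reflexivity. Qed.

Lemma SS_eq K : SS K = sum_R K (fun a => sum_R K (fun b => q a b * 1)).
Proof. reflexivity. Qed.

Lemma texp_prod K N i h G : (i < N)%nat ->
  texp q K N (fun w => h (w i) * G (upd i (0,0)%nat w)) * SS K =
  texp q K 1 (fun w => h (w 0%nat)) * texp q K N (fun w => G (upd i (0,0)%nat w)).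
Proof. revert G; induction N; intros G Hi; [lia|]. rewrite SS_eq, texp1, !(texp_S K N).
  destruct (Nat.eq_dec i N).
  - subst i.
    assert (E1 : forall a b, texp q K N (fun w => h (upd N (a, b) w N) * G (upd N (0, 0)%nat (upd N (a, b) w)))
                = h (a,b) * texp q K N (fun w => G (upd N (0, 0)%nat w))).
    { intros. rewrite <- texp_scal. f_equal. apply functional_extensionality; intros w.
      replace (upd N (a,b) w N) with (a,b) by (unfold upd; rewrite Nat.eqb_refl; auto). f_equal. f_equal. apply functional_extensionality; intros j.
      unfold upd. destruct (Nat.eqb j N); auto. }
    assert (E2 : forall a b, texp q K N (fun w => G (upd N (0, 0)%nat (upd N (a, b) w)))
                = texp q K N (fun w => G (upd N (0, 0)%nat w))).
    { intros. f_equal. apply functional_extensionality; intros w. f_equal. apply functional_extensionality; intros j.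
      unfold upd. destruct (Nat.eqb j N); auto. }
    set (T := texp q K N (fun w => G (upd N (0, 0)%nat w))) in *.
    rewrite (sum_R_ext K _ (fun a => T * sum_R K (fun b => q a b * h (a,b)))).
    2:{ intros a _. rewrite <- sum_R_scal. apply sum_R_ext; intros b _. rewrite E1. ring. }
    rewrite (sum_R_ext K (fun a => sum_R K (fun b => q a b * texp q K N (fun w => G (upd N (0, 0)%nat (upd N (a, b) w)))))
       (fun a => T * sum_R K (fun b => q a b * 1))).
    2:{ intros a _. rewrite <- sum_R_scal. apply sum_R_ext; intros b _. rewrite E2. ring. }
    rewrite !sum_R_scal. ring.
  - assert (E1 : forall a b, texp q K N (fun w => h (upd N (a, b) w i) * G (upd i (0, 0)%nat (upd N (a, b) w)))
               = texp q K N (fun w => h (w i) * (fun w' => G (upd N (a,b) w')) (upd i (0, 0)%nat w))).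
    { intros. f_equal. apply functional_extensionality; intros w. unfold upd at 1.
      destruct (Nat.eqb_spec i N); [lia|]. f_equal. f_equal. apply functional_extensionality; intros j.
      unfold upd. destruct (Nat.eqb_spec j i); destruct (Nat.eqb_spec j N); auto; lia. }
    assert (E2 : forall a b, texp q K N (fun w => G (upd i (0, 0)%nat (upd N (a, b) w)))
               = texp q K N (fun w => (fun w' => G (upd N (a,b) w')) (upd i (0, 0)%nat w))).
    { intros. f_equal. apply functional_extensionality; intros w. f_equal. apply functional_extensionality; intros j.
      unfold upd. destruct (Nat.eqb_spec j i); destruct (Nat.eqb_spec j N); auto; lia. }
    rewrite Rmult_comm, <- sum_R_scal. rewrite <- sum_R_scal. apply sum_R_ext; intros a _.
    rewrite <- !sum_R_scal. apply sum_R_ext; intros b _. rewrite E1, E2.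
    pose proof (IHN (fun w' => G (upd N (a,b) w')) ltac:(lia)) as IH. rewrite SS_eq, texp1 in IH.
    transitivity (q a b * (texp q K N (fun w => h (w i) * (fun w' => G (upd N (a, b) w')) (upd i (0, 0)%nat w)) *
       sum_R K (fun a0 => sum_R K (fun b0 => q a0 b0 * 1)))); [ring|]. rewrite IH. ring.
Qed.

End T.

Open Scope nat_scope.
Open Scope nat_scope.

Lemma sum_nat_ext n (f g : nat -> nat) : (forall i, i < n -> f i = g i) -> sum_nat n f = sum_nat n g.
Proof. induction n; simpl; intros H; auto. rewrite IHn by (intros; apply H; lia). rewrite H by lia. auto. Qed.

Lemma sum_nat_le n (f g : nat -> nat) : (forall i, i < n -> f i <= g i) -> sum_nat n f <= sum_nat n g.
Proof. induction n; simpl; intros H; auto. pose proof (H n ltac:(lia)). assert (sum_nat n f <= sum_nat n g) by (apply IHn; intros; apply H; lia). lia. Qed.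

Lemma sum_nat_term n (f : nat -> nat) i : i < n -> f i <= sum_nat n f.
Proof. induction n; intros Hi; [lia|]. simpl. destruct (Nat.eq_dec i n). subst; lia. pose proof (IHn ltac:(lia)); lia. Qed.

Lemma sum_nat_plus n (f g : nat -> nat) : sum_nat n (fun i => f i + g i) = sum_nat n f + sum_nat n g.
Proof. induction n; simpl; auto. rewrite IHn; lia. Qed.

Lemma sum_nat_zero n (f : nat -> nat) : (forall i, i < n -> f i = 0) -> sum_nat n f = 0.
Proof. intros H. transitivity (sum_nat n (fun _ => 0)). apply sum_nat_ext; auto. clear H. induction n; simpl; lia. Qed.

Lemma sum_nat_add X B (g : nat -> nat) : sum_nat (X + B) g = sum_nat X g + sum_nat B (fun s => g (X + s)).
Proof. induction B; simpl. rewrite Nat.add_0_r; lia. rewrite Nat.add_succ_r. simpl. rewrite IHB. lia. Qed.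

Lemma sum_nat_split A B (g : nat -> nat) : sum_nat (A * B) g = sum_nat A (fun j => sum_nat B (fun s => g (j * B + s))).
Proof. induction A; simpl; auto. rewrite Nat.add_comm, sum_nat_add, IHA. lia. Qed.

Lemma sum_nat_superadd n (c : nat -> nat) d : sum_nat n (fun i => c i - d) <= sum_nat n c - d.
Proof. induction n; simpl; lia. Qed.

Lemma sum_nat_if (b : bool) n (f : nat -> nat) : sum_nat n (fun i => if b then f i else 0) = if b then sum_nat n f else 0.
Proof. destruct b; auto. apply sum_nat_zero; auto. Qed.

Section C.
Variable m : nat.
Hypothesis Hm : 2 <= m.

Lemma pow_pos' n : 0 < Nat.pow m n.
Proof. induction n; simpl; lia. Qed.

Lemma divmod_block M j s : 0 < M -> s < M -> (j * M + s) / M = j /\ (j * M + s) mod M = s.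
Proof. intros HM Hs. split.
  - rewrite Nat.div_add_l by lia. rewrite Nat.div_small by lia. lia.
  - rewrite Nat.add_comm, Nat.Div0.mod_add. apply Nat.mod_small; lia. Qed.

Lemma idx_lt M j s : j < m -> s < M -> j * M + s < m * M.
Proof. intros; nia. Qed.

Lemma rec_val_ext n v v' : (forall i, i < Nat.pow m n -> v i = v' i) -> rec_val m n v = rec_val m n v'.
Proof. revert v v'; induction n; intros v v' H; simpl.
  - apply H. simpl; lia.
  - f_equal. apply sum_nat_ext. intros j Hj. apply IHn. intros s Hs. apply H. simpl. apply idx_lt; auto. Qed.

Lemma rec_comp j L v : rec_val m (j + L) v = rec_val m j (fun t => rec_val m L (fun s => v (t * Nat.pow m L + s))).
Proof. revert v; induction j; intros v; simpl; auto.
  f_equal. apply sum_nat_ext. intros i Hi. rewrite IHj. f_equal. apply functional_extensionality; intros t.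
  f_equal. apply functional_extensionality; intros s. f_equal. rewrite Nat.pow_add_r. nia. Qed.

Lemma rec_drop j b t : t < Nat.pow m j -> b t - j <= rec_val m j b.
Proof. revert b t; induction j; intros b t Ht; simpl in *.
  - assert (t = 0) by lia. subst; lia.
  - set (M := Nat.pow m j) in *. assert (HM : 0 < M) by apply pow_pos'.
    pose proof (Nat.div_mod t M ltac:(lia)) as Hd. set (i := t / M) in *. set (s := t mod M) in *.
    assert (Hs : s < M) by (apply Nat.mod_upper_bound; lia).
    assert (Hi : i < m) by (unfold i; apply Nat.Div0.div_lt_upper_bound; nia).
    pose proof (IHj (fun s0 => b (i * M + s0)) s Hs) as H1. simpl in H1.
    replace (i * M + s) with t in H1 by lia.
    pose proof (sum_nat_term m (fun i0 => rec_val m j (fun j0 => b (i0 * M + j0))) i Hi). simpl in *. lia. Qed.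

Lemma lemC j a b : (forall t, t < Nat.pow m j -> b t <= a t) ->
  rec_val m j b + sum_nat (Nat.pow m j) (fun t => if j <=? b t then a t - b t else 0) <= rec_val m j a.
Proof. revert a b; induction j; intros a b H; simpl.
  - pose proof (H 0 ltac:(simpl; lia)). lia.
  - set (M := Nat.pow m j). assert (HM : 0 < M) by apply pow_pos'.
    rewrite sum_nat_split.
    set (A := fun i => rec_val m j (fun s => a (i * M + s))).
    set (B := fun i => rec_val m j (fun s => b (i * M + s))).
    set (T := fun i => sum_nat M (fun s => if S j <=? b (i * M + s) then a (i * M + s) - b (i * M + s) else 0)).
    set (T' := fun i => sum_nat M (fun s => if j <=? b (i * M + s) then a (i * M + s) - b (i * M + s) else 0)).
    assert (H1 : forall i, i < m -> B i + T' i <= A i).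
    { intros i Hi. apply (IHj (fun s => a (i * M + s)) (fun s => b (i * M + s))). intros t Ht. apply H. apply idx_lt; auto. }
    assert (H2 : forall i, T i <= T' i).
    { intros i. apply sum_nat_le. intros s _. destruct (Nat.leb_spec (S j) (b (i * M + s))); destruct (Nat.leb_spec j (b (i * M + s))); lia. }
    assert (H3 : sum_nat m B + sum_nat m T <= sum_nat m A).
    { rewrite <- sum_nat_plus. apply sum_nat_le. intros i Hi. pose proof (H1 i Hi). pose proof (H2 i). lia. }
    assert (H4 : sum_nat m B = 0 -> sum_nat m T = 0).
    { intros HB. apply sum_nat_zero. intros i Hi. apply sum_nat_zero. intros s Hs.
      destruct (Nat.leb_spec (S j) (b (i * M + s))); auto.
      pose proof (rec_drop j (fun s0 => b (i * M + s0)) s Hs). pose proof (sum_nat_term m B i Hi). unfold B in *. simpl in *. lia. }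
    change (sum_nat m B - 1 + sum_nat m T <= sum_nat m A - 1).
    destruct (sum_nat m B) eqn:E; [rewrite H4 by auto|]; lia. Qed.

Fixpoint opc (n : nat) (y : nat -> nat) (i : nat) : nat :=
  match n with
  | O => if Nat.eqb (y O) O then 1 else 0
  | S n' => if Nat.leb 1 (sum_nat m (fun j => rec_val m n' (fun s => y (j * Nat.pow m n' + s))))
            then opc n' (fun s => y (i / Nat.pow m n' * Nat.pow m n' + s)) (i mod Nat.pow m n')
            else 0
  end.

Lemma open_sum n y : open_count m n y = sum_nat (Nat.pow m n) (opc n y).
Proof. revert y; induction n; intros y; simpl; auto.
  set (M := Nat.pow m n). assert (HM : 0 < M) by apply pow_pos'.
  destruct (sum_nat m (fun j => rec_val m n (fun s => y (j * M + s)))).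
  { symmetry; apply sum_nat_zero; auto. }
  rewrite sum_nat_split. apply sum_nat_ext. intros j Hj.
  rewrite IHn. apply sum_nat_ext. intros s Hs. destruct (divmod_block M j s HM Hs) as [E1 E2]. rewrite E1, E2. auto. Qed.

Lemma opc_zero n y i : i < Nat.pow m n -> y i <> 0 -> opc n y i = 0.
Proof. revert y i; induction n; intros y i Hi Hy; simpl in *.
  - assert (i = 0) by lia. subst. destruct (Nat.eqb_spec (y 0) 0); auto; lia.
  - set (M := Nat.pow m n) in *. assert (HM : 0 < M) by apply pow_pos'.
    destruct (sum_nat m (fun j => rec_val m n (fun s => y (j * M + s)))); auto. apply IHn. apply Nat.mod_upper_bound; lia.
    rewrite (Nat.mul_comm (i / M) M), <- Nat.div_mod_eq. auto. Qed.

Lemma opc_ext n y y' i : i < Nat.pow m n -> (forall s, s < Nat.pow m n -> y s = y' s) -> opc n y i = opc n y' i.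
Proof. revert y y' i; induction n; intros y y' i Hi H; simpl in *.
  - rewrite H by lia. auto.
  - set (M := Nat.pow m n) in *. assert (HM : 0 < M) by apply pow_pos'.
    replace (sum_nat m (fun j => rec_val m n (fun s => y (j * M + s)))) with (sum_nat m (fun j => rec_val m n (fun s => y' (j * M + s)))).
    2:{ apply sum_nat_ext. intros j Hj. apply rec_val_ext. intros s Hs. symmetry. apply H. apply idx_lt; auto. }
    destruct (sum_nat m (fun j => rec_val m n (fun s => y' (j * M + s)))); auto. apply IHn. apply Nat.mod_upper_bound; lia.
    intros s Hs. apply H. apply idx_lt; auto. apply Nat.Div0.div_lt_upper_bound; nia. Qed.

Lemma open_count_ext n y y' : (forall s, s < Nat.pow m n -> y s = y' s) -> open_count m n y = open_count m n y'.
Proof. intros H. rewrite !open_sum. apply sum_nat_ext. intros; apply opc_ext; auto. Qed.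

Lemma Dbound n x y : (forall i, i < Nat.pow m n -> y i <= x i) ->
  rec_val m n y + sum_nat (Nat.pow m n) (fun i => x i * opc n y i) <= rec_val m n x.
Proof. revert x y; induction n; intros x y H; simpl.
  - pose proof (H 0 ltac:(simpl; lia)). destruct (Nat.eqb_spec (y 0) 0); lia.
  - set (M := Nat.pow m n). assert (HM : 0 < M) by apply pow_pos'.
    rewrite sum_nat_split.
    set (A := fun i => rec_val m n (fun s => x (i * M + s))).
    set (B := fun i => rec_val m n (fun s => y (i * M + s))).
    set (W := fun i => sum_nat M (fun s => x (i * M + s) * opc n (fun s0 => y (i * M + s0)) s)).
    assert (E : sum_nat m (fun j => sum_nat M (fun s => x (j * M + s) *
         (if 1 <=? sum_nat m B then opc n (fun s0 => y ((j * M + s) / M * M + s0)) ((j * M + s) mod M) else 0)))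
         = if 1 <=? sum_nat m B then sum_nat m W else 0).
    { destruct (1 <=? sum_nat m B).
      - apply sum_nat_ext. intros j Hj. apply sum_nat_ext. intros s Hs. destruct (divmod_block M j s HM Hs) as [E1 E2].
        rewrite E1, E2. auto.
      - apply sum_nat_zero. intros. apply sum_nat_zero. intros. lia. }
    change (sum_nat m B - 1 + sum_nat m (fun j => sum_nat M (fun s => x (j * M + s) *
         (if 1 <=? sum_nat m B then opc n (fun s0 => y ((j * M + s) / M * M + s0)) ((j * M + s) mod M) else 0)))
         <= sum_nat m A - 1).
    rewrite E.
    assert (H3 : sum_nat m B + sum_nat m W <= sum_nat m A).
    { rewrite <- sum_nat_plus. apply sum_nat_le. intros i Hi. apply (IHn (fun s => x (i * M + s)) (fun s => y (i * M + s))).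
      intros t Ht. apply H. apply idx_lt; auto. }
    clear E. destruct (1 <=? sum_nat m B) eqn:E'; [apply Nat.leb_le in E'|apply Nat.leb_gt in E']; lia. Qed.

Lemma L2 l v : sum_nat (Nat.pow m l) (fun s => v s - l) <= rec_val m l v.
Proof. revert v; induction l; intros v; simpl. lia.
  set (M := Nat.pow m l). rewrite sum_nat_split.
  eapply Nat.le_trans; [|apply sum_nat_superadd].
  apply sum_nat_le. intros i Hi. pose proof (IHl (fun s => v (i * M + s))). simpl in *.
  eapply Nat.le_trans; [|apply Nat.sub_le_mono_r; eauto].
  eapply Nat.le_trans; [|apply sum_nat_superadd]. apply sum_nat_le. intros. lia. Qed.

Lemma slack_sum (R : nat -> nat) : forall mm, 2 <= mm ->
  sum_nat mm (fun i => R i - 1) + (if 1 <=? R 0 then if 1 <=? R 1 then 1 else 0 else 0) <= sum_nat mm R - 1.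
Proof. intros mm Hmm. induction Hmm.
  - simpl. destruct (R 0) as [|a]; destruct (R 1) as [|b]; simpl; lia.
  - revert IHHmm. generalize (if 1 <=? R 0 then if 1 <=? R 1 then 1 else 0 else 0). intros c IH. simpl. lia. Qed.

Lemma L2s l v : sum_nat (Nat.pow m (S l)) (fun s => v s - S l)
   + (if S l <=? v 0 then if S l <=? v (Nat.pow m l) then 1 else 0 else 0) <= rec_val m (S l) v.
Proof. simpl rec_val. set (M := Nat.pow m l). assert (HM : 0 < M) by apply pow_pos'.
  set (R := fun i => rec_val m l (fun s => v (i * M + s))).
  pose proof (slack_sum R m Hm) as HS.
  assert (H1 : forall i, sum_nat M (fun s => v (i * M + s) - S l) <= R i - 1).
  { intros i. pose proof (L2 l (fun s => v (i * M + s))). simpl in *.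
    eapply Nat.le_trans; [|apply Nat.sub_le_mono_r; eauto].
    eapply Nat.le_trans; [|apply sum_nat_superadd]. apply sum_nat_le. intros. lia. }
  assert (H2 : sum_nat (Nat.pow m (S l)) (fun s => v s - S l) <= sum_nat m (fun i => R i - 1)).
  { simpl. rewrite sum_nat_split. apply sum_nat_le. intros; apply H1. }
  assert (H3 : (if S l <=? v 0 then if S l <=? v M then 1 else 0 else 0) <=
               (if 1 <=? R 0 then if 1 <=? R 1 then 1 else 0 else 0)).
  { assert (R0 : v 0 - l <= R 0).
    { pose proof (rec_drop l (fun s => v (0 * M + s)) 0 HM) as X. unfold R. simpl in X |- *. exact X. }
    assert (R1 : v M - l <= R 1).
    { pose proof (rec_drop l (fun s => v (1 * M + s)) 0 HM) as X. unfold R. cbv beta in X. replace (1 * M + 0) with M in X by lia. exact X. }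
    destruct (Nat.leb_spec (S l) (v 0)); destruct (Nat.leb_spec (S l) (v M)); destruct (Nat.leb_spec 1 (R 0)); destruct (Nat.leb_spec 1 (R 1)); lia. }
  lia. Qed.


Lemma top_nat n k l (x y : nat -> nat) :
  (forall i, i < Nat.pow m (k + l) * Nat.pow m n -> y i <= x i) ->
  let M := Nat.pow m n in
  let z := fun t => rec_val m n (fun s => y (t * M + s)) in
  let Wt := fun t => sum_nat M (fun i => x (t * M + i) * opc n (fun s => y (t * M + s)) i) in
  sum_nat (Nat.pow m (k + l)) (fun t => if z t =? k then Wt t - l else 0)
  + match l with 0 => 0 | S l' =>
      (if andb (z 0 =? k) (l <=? Wt 0) then 1 else 0) *
      (if andb (z (Nat.pow m l' * Nat.pow m k) =? k) (l <=? Wt (Nat.pow m l' * Nat.pow m k)) then 1 else 0) end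
  <= rec_val m (n + k + l) x.
Proof. intros Hxy M z Wt.
  set (u := fun t => rec_val m n (fun s => x (t * M + s))).
  assert (HD : forall t, t < Nat.pow m (k + l) -> z t + Wt t <= u t).
  { intros t Ht. apply Dbound. intros i Hi. apply Hxy. fold M. nia. }
  replace (n + k + l) with ((l + k) + n) by lia. rewrite rec_comp. fold M. fold u.
  rewrite rec_comp.
  set (K := Nat.pow m k).
  set (v := fun s => rec_val m k (fun t => u (s * K + t))).
  assert (HK : 0 < K) by apply pow_pos'.
  assert (Ekl : Nat.pow m (k + l) = Nat.pow m l * K) by (unfold K; rewrite <- Nat.pow_add_r; f_equal; lia).
  assert (HC : forall s, s < Nat.pow m l ->
     sum_nat K (fun t => if k <=? z (s * K + t) then u (s * K + t) - z (s * K + t) else 0) <= v s).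
  { intros s Hs. pose proof (lemC k (fun t => u (s * K + t)) (fun t => z (s * K + t))) as X.
    fold K in X. unfold v. cbv beta in X. enough (rec_val m k (fun t => z (s * K + t)) + sum_nat K (fun t => if k <=? z (s * K + t) then u (s * K + t) - z (s * K + t) else 0) <= rec_val m k (fun t => u (s * K + t))) by lia.
    apply X. intros t Ht. pose proof (HD (s * K + t) ltac:(rewrite Ekl; nia)). lia. }
  assert (HS : forall s, s < Nat.pow m l ->
     sum_nat K (fun t => if z (s * K + t) =? k then Wt (s * K + t) - l else 0) <= v s - l).
  { intros s Hs. eapply Nat.le_trans; [|apply Nat.sub_le_mono_r; apply HC; auto].
    eapply Nat.le_trans; [|apply sum_nat_superadd]. apply sum_nat_le. intros t Ht.
    pose proof (HD (s * K + t) ltac:(rewrite Ekl; nia)).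
    destruct (Nat.eqb_spec (z (s * K + t)) k).
    - rewrite e. rewrite Nat.leb_refl. lia.
    - lia. }
  assert (Hsum : sum_nat (Nat.pow m (k + l)) (fun t => if z t =? k then Wt t - l else 0) <= sum_nat (Nat.pow m l) (fun s => v s - l)).
  { rewrite Ekl, sum_nat_split. apply sum_nat_le. auto. }
  assert (H0v : forall s, s < Nat.pow m l -> (if andb (z (s * K) =? k) (l <=? Wt (s * K)) then 1 else 0) <= (if l <=? v s then 1 else 0)).
  { intros s Hs. pose proof (HC s Hs) as X. pose proof (sum_nat_term K (fun t => if k <=? z (s * K + t) then u (s * K + t) - z (s * K + t) else 0) 0 HK) as Y.
    cbv beta in Y. rewrite Nat.add_0_r in Y. pose proof (HD (s * K) ltac:(rewrite Ekl; nia)).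
    destruct (Nat.eqb_spec (z (s * K)) k); simpl; [|lia].
    rewrite e, Nat.leb_refl in Y. destruct (Nat.leb_spec l (Wt (s * K))); destruct (Nat.leb_spec l (v s)); lia. }
  destruct l as [|l'].
  - pose proof (L2 0 v). lia.
  - pose proof (L2s l' v) as X.
    pose proof (H0v 0 ltac:(apply pow_pos')) as Y0. pose proof (H0v (Nat.pow m l') ltac:(simpl; pose proof (pow_pos' l'); nia)) as Y1.
    replace (0 * K) with 0 in Y0 by lia. fold K.
    destruct (andb (z 0 =? k) (S l' <=? Wt 0)); destruct (andb (z (Nat.pow m l' * K) =? k) (S l' <=? Wt (Nat.pow m l' * K)));
    destruct (S l' <=? v 0); destruct (S l' <=? v (Nat.pow m l')); simpl in *; lia.
Qed.

End C.

Open Scope R_scope.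
Open Scope R_scope.

Lemma INR_sum n g : INR (sum_nat n g) = sum_R n (fun i => INR (g i)).
Proof. induction n; simpl; auto. rewrite plus_INR, IHn. auto. Qed.

Lemma Bernoulli s n : 0 <= s -> 1 + INR n * (s - 1) <= s ^ n.
Proof. intros Hs. induction n. simpl; lra. rewrite S_INR. simpl.
  assert (s * (1 + INR n * (s - 1)) <= s * s ^ n) by (apply Rmult_le_compat_l; auto).
  pose proof (pos_INR n). assert (0 <= INR n * ((s - 1) * (s - 1))) by (apply Rmult_le_pos; [apply pos_INR | apply Rle_0_sqr]). nra. Qed.

Section Gen.
Variable q : nat -> nat -> R.
Hypothesis qpos : forall a b, 0 <= q a b.
Hypothesis Hcv : Un_cv (fun K => sum_R K (fun a => sum_R K (fun b => q a b))) 1.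
Hypothesis Hcoup : XY_coupling q.

Definition PP K := texp q K 1 (fun w => indic (Nat.eqb (snd (w O)) O)).

Lemma SS_mono K K' : (K <= K')%nat -> SS q K <= SS q K'.
Proof. intros; unfold SS; apply texp_Kmono; auto; intros; lra. Qed.

Lemma SS_cv2 eps : 0 < eps -> exists K0, forall K, (K0 <= K)%nat -> Rabs (SS q K - 1) < eps.
Proof. intros He. destruct (Hcv eps He) as [K0 HK0]. exists K0. intros K HK. specialize (HK0 K HK).
  unfold R_dist in HK0. rewrite SS_eq.
  replace (sum_R K (fun a => sum_R K (fun b => q a b * 1))) with (sum_R K (fun a => sum_R K (fun b => q a b))).
  2:{ apply sum_R_ext; intros; apply sum_R_ext; intros; ring. }
  exact HK0. Qed.

Lemma SS_cv eps : 0 < eps -> exists K0, forall K, (K0 <= K)%nat -> 1 - eps < SS q K.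
Proof. intros He. destruct (SS_cv2 eps He) as [K0 HK0]. exists K0. intros K HK. specialize (HK0 K HK).
  apply Rabs_def2 in HK0. lra. Qed.

Lemma SS_le1 K : SS q K <= 1.
Proof. destruct (Rle_dec (SS q K) 1) as [H|H]; auto. exfalso.
  destruct (SS_cv2 (SS q K - 1)) as [K0 HK0]; [lra|].
  specialize (HK0 (Nat.max K0 K) ltac:(lia)). pose proof (SS_mono K (Nat.max K0 K) ltac:(lia)).
  apply Rabs_def2 in HK0. lra. Qed.

Lemma PP_mono K K' : (K <= K')%nat -> PP K <= PP K'.
Proof. intros; unfold PP; apply texp_Kmono; auto; intros; unfold indic; destruct (_ =? _)%nat; lra. Qed.

Lemma PP_le_SS K : PP K <= SS q K.
Proof. unfold PP, SS. apply texp_mono; auto. intros; unfold indic; destruct (_ =? _)%nat; lra. Qed.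

Lemma SP_mono K K' : (K <= K')%nat -> SS q K - PP K <= SS q K' - PP K'.
Proof. intros HK. unfold SS, PP. rewrite <- !texp_minus. apply texp_Kmono; auto. intros; unfold indic; destruct (_ =? _)%nat; lra. Qed.

Lemma H1_eq K : texp q K 1 (fun w => INR (fst (w O) - snd (w O))) =
  texp q K 1 (fun w => (fun p => INR (fst p) * indic (Nat.eqb (snd p) O)) (w O)).
Proof. etransitivity; [exact (texp1 q K (fun p => INR (fst p - snd p)))|]. etransitivity; [|symmetry; exact (texp1 q K (fun p => INR (fst p) * indic (Nat.eqb (snd p) O)))].
  apply sum_R_ext; intros a _; apply sum_R_ext; intros b _. simpl.
  destruct (qpos a b) as [Hq|Hq]; [|rewrite <- Hq; ring].
  destruct (Hcoup a b Hq) as [H1 H2]. f_equal. unfold indic.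
  destruct (Nat.eqb_spec b 0).
  - subst. rewrite Nat.sub_0_r. ring.
  - rewrite H2 by lia. rewrite Nat.sub_diag. simpl. ring. Qed.

Lemma theta_lemma P1 Kp th : 0 < PP Kp -> 0 <= th < 1 ->
  exists K2, (Kp <= K2)%nat /\ forall K', (K2 <= K')%nat -> th <= SS q K' ^ P1 * (PP K2 / PP K').
Proof. intros Hp Hth. remember (PP Kp) as p0 eqn:Ep.
  set (eps := (1 - th) / (INR P1 + / p0 + 1)).
  assert (Hd : 0 < INR P1 + / p0 + 1) by (pose proof (pos_INR P1); pose proof (Rinv_0_lt_compat p0 Hp); lra).
  assert (He : 0 < eps) by (unfold eps; apply Rdiv_lt_0_compat; lra).
  assert (He2 : eps * (INR P1 + / p0 + 1) = 1 - th) by (unfold eps, Rdiv; rewrite Rmult_assoc, Rinv_l by lra; ring).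
  destruct (SS_cv eps He) as [K0 HK0].
  exists (Nat.max K0 Kp). split; [lia|]. intros K' HK'.
  set (K2 := Nat.max K0 Kp) in *.
  assert (S2 : 1 - eps < SS q K2) by (apply HK0; lia).
  assert (S' : 1 - eps < SS q K') by (apply HK0; lia).
  assert (S'1 : SS q K' <= 1) by apply SS_le1.
  assert (P2 : p0 <= PP K2) by (rewrite Ep; apply PP_mono; lia).
  assert (P2' : PP K2 <= PP K') by (apply PP_mono; lia).
  assert (SPm : SS q K2 - PP K2 <= SS q K' - PP K') by (apply SP_mono; lia).
  assert (B1 : 1 - INR P1 * eps <= SS q K' ^ P1).
  { pose proof (Bernoulli (SS q K') P1). assert (0 <= SS q K') by (unfold SS; apply texp_nonneg; auto; intros; lra).
    assert (INR P1 * (SS q K' - 1) >= - INR P1 * eps) by (pose proof (pos_INR P1); nra). lra. }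
  assert (B2 : 1 - eps / p0 <= PP K2 / PP K').
  { apply (Rmult_le_reg_r (PP K')); [lra|]. unfold Rdiv. rewrite Rmult_assoc, Rinv_l by lra.
    assert (PP K' <= PP K2 + eps) by lra.
    assert (eps / p0 * PP K' >= eps) .
    { unfold Rdiv. rewrite Rmult_assoc. assert (/ p0 * PP K' >= 1).
      { apply Rle_ge. apply (Rmult_le_reg_l p0); auto. rewrite <- Rmult_assoc, Rinv_r by lra. lra. }
      nra. }
    nra. }
  assert (Hsmall1 : INR P1 * eps <= 1 - th) by (assert (eps * / p0 >= 0) by (apply Rle_ge; apply Rmult_le_pos; [lra| apply Rlt_le, Rinv_0_lt_compat; auto]); nra).
  assert (Hsmall2 : eps / p0 <= 1 - th) by (unfold Rdiv; pose proof (pos_INR P1); nra).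
  assert (0 <= 1 - INR P1 * eps) by lra. assert (0 <= 1 - eps / p0) by lra.
  apply Rle_trans with ((1 - INR P1 * eps) * (1 - eps / p0)).
  - assert (eps * (INR P1 * (eps / p0)) >= 0).
    { apply Rle_ge. apply Rmult_le_pos; [lra|]. apply Rmult_le_pos; [apply pos_INR|]. unfold Rdiv. apply Rmult_le_pos; [lra|]. apply Rlt_le, Rinv_0_lt_compat; auto. }
    unfold Rdiv in *. nra.
  - apply Rmult_le_compat; auto. Qed.

End Gen.

Section Main.
Variable m : nat.
Hypothesis Hm : (2 <= m)%nat.
Variable q : nat -> nat -> R.
Hypothesis qpos : forall a b, 0 <= q a b.
Hypothesis Hcoup : XY_coupling q.
Variables (eta r : R) (n k l : nat).
Hypothesis Heta : 0 < eta.
Hypothesis Hr : 0 <= r.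
Hypothesis Hl : INR l <= r * eta / 2.

Definition Nn (u : nat -> nat*nat) := open_count m n (fun i => snd (u i)).
Definition Ia (u : nat -> nat*nat) := indic (if Rle_dec r (INR (Nn u)) then true else false) *
   indic (Nat.eqb (rec_val m n (fun i => snd (u i))) k).
Definition Wn (u : nat -> nat*nat) := sum_nat (Nat.pow m n) (fun i => (fst (u i) * opc m n (fun s => snd (u s)) i)%nat).
Definition gf u := Ia u * (INR (Wn u) - INR l).
Definition hf u := indic (andb (Nat.eqb (rec_val m n (fun i => snd (u i))) k) (Nat.leb l (Wn u))).
Definition Nf u := INR (Nn u) * Ia u.

Lemma indic_01 b : indic b = 0 \/ indic b = 1.
Proof. destruct b; simpl; auto. Qed.

Lemma loc_Nn (u u' : nat -> nat*nat) : (forall j, (j < Nat.pow m n)%nat -> u j = u' j) -> Nn u = Nn u'.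
Proof. intros H. unfold Nn. apply (open_count_ext m Hm). intros s Hs. rewrite H; auto. Qed.

Lemma loc_rec (u u' : nat -> nat*nat) : (forall j, (j < Nat.pow m n)%nat -> u j = u' j) ->
  rec_val m n (fun i => snd (u i)) = rec_val m n (fun i => snd (u' i)).
Proof. intros H. apply (rec_val_ext m Hm). intros s Hs. rewrite H; auto. Qed.

Lemma loc_Wn (u u' : nat -> nat*nat) : (forall j, (j < Nat.pow m n)%nat -> u j = u' j) -> Wn u = Wn u'.
Proof. intros H. unfold Wn. apply sum_nat_ext. intros i Hi. rewrite H by auto. f_equal.
  apply (opc_ext m Hm); auto. intros s Hs. rewrite H; auto. Qed.

Lemma loc_Ia : loc (Nat.pow m n) Ia.
Proof. intros u u' H. unfold Ia. rewrite (loc_Nn u u' H), (loc_rec u u' H). auto. Qed.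

Lemma loc_gf : loc (Nat.pow m n) gf.
Proof. intros u u' H. unfold gf. rewrite (loc_Ia u u' H), (loc_Wn u u' H). auto. Qed.

Lemma loc_hf : loc (Nat.pow m n) hf.
Proof. intros u u' H. unfold hf. rewrite (loc_Wn u u' H), (loc_rec u u' H). auto. Qed.

Lemma INR_if (b : bool) : INR (if b then 1%nat else 0%nat) = indic b.
Proof. destruct b; simpl; auto. Qed.

Definition slackf (w : nat -> nat*nat) : R :=
  match l with O => 0 | S l' =>
    hf (fun j => w (0 * Nat.pow m n + j)%nat) * hf (fun j => w (Nat.pow m l' * Nat.pow m k * Nat.pow m n + j)%nat) end.

Lemma pointwise w : (forall i, (i < Nat.pow m (n + k + l))%nat -> 0 < q (fst (w i)) (snd (w i))) ->
  sum_R (Nat.pow m (k + l)) (fun t => gf (fun j => w (t * Nat.pow m n + j)%nat)) + slackf w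
  <= INR (rec_val m (n + k + l) (fun i => fst (w i))).
Proof. intros Hsupp.
  assert (Hxy : forall i, (i < Nat.pow m (k + l) * Nat.pow m n)%nat -> (snd (w i) <= fst (w i))%nat).
  { intros i Hi. assert (E : (Nat.pow m (k + l) * Nat.pow m n = Nat.pow m (n + k + l))%nat) by (rewrite <- Nat.pow_add_r; f_equal; lia).
    rewrite E in Hi. apply (Hcoup _ _ (Hsupp i Hi)). }
  pose proof (top_nat m Hm n k l (fun i => fst (w i)) (fun i => snd (w i)) Hxy) as T. cbv zeta in T.
  apply le_INR in T. rewrite plus_INR, INR_sum in T.
  eapply Rle_trans; [|exact T]. apply Rplus_le_compat.
  - apply sum_R_le. intros t Ht. unfold gf, Ia, Wn. cbv beta.
    destruct (Nat.eqb_spec (rec_val m n (fun s => snd (w (t * Nat.pow m n + s)%nat))) k).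
    + simpl (indic true). set (W := sum_nat _ _).
      destruct (indic_01 (if Rle_dec r (INR (Nn (fun j => w (t * Nat.pow m n + j)%nat))) then true else false)) as [E|E]; rewrite E.
      * rewrite Rmult_0_l, Rmult_0_l. apply pos_INR.
      * destruct (le_lt_dec l W). rewrite minus_INR by auto. lra.
        pose proof (pos_INR (W - l)). pose proof (lt_INR _ _ l0). lra.
    + simpl (indic false). rewrite Rmult_0_r, Rmult_0_l. simpl. lra.
  - unfold slackf, hf, Wn. destruct l as [|l']; [simpl; lra|].
    rewrite mult_INR, !INR_if. right. reflexivity.
Qed.


Lemma pw_ge1 j : (1 <= Nat.pow m j)%nat.
Proof. pose proof (pow_pos' m Hm j). lia. Qed.

Definition slack_exp K' := match l with O => 0 | S l' =>
  SS q K' ^ (Nat.pow m (n + k + l) - Nat.pow m n - Nat.pow m n) * texp q K' (Nat.pow m n) hf * texp q K' (Nat.pow m n) hf end.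

Lemma RHS_bound K' :
  INR m ^ (k + l) * SS q K' ^ (Nat.pow m (n + k + l) - Nat.pow m n) * texp q K' (Nat.pow m n) gf + slack_exp K'
  <= texp q K' (Nat.pow m (n + k + l)) (fun w => INR (rec_val m (n + k + l) (fun i => fst (w i)))).
Proof.
  eapply Rle_trans; [|apply (texp_mono_supp q qpos) with (f := fun w => sum_R (Nat.pow m (k + l)) (fun t => gf (fun j => w (t * Nat.pow m n + j)%nat)) + slackf w); intros; apply pointwise; auto].
  rewrite texp_plus, texp_sum.
  assert (E : (Nat.pow m (n + k + l) = Nat.pow m (k + l) * Nat.pow m n)%nat) by (rewrite <- Nat.pow_add_r; f_equal; lia).
  apply Rplus_le_compat.
  - rewrite (sum_R_ext _ _ (fun _ => SS q K' ^ (Nat.pow m (n + k + l) - Nat.pow m n) * texp q K' (Nat.pow m n) gf)).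
    + rewrite sum_R_const, pow_INR. lra.
    + intros t Ht. apply texp_block; auto. rewrite E. nia. apply loc_gf.
  - unfold slack_exp, slackf. destruct l as [|l'].
    + rewrite texp_zero. lra.
    + rewrite (texp_block2 q K' _ (Nat.pow m n) (Nat.pow m n)); auto; try apply loc_hf.
      * lra.
      * pose proof (pw_ge1 l'). pose proof (pw_ge1 k). assert (1 <= Nat.pow m l' * Nat.pow m k)%nat by nia. rewrite Nat.mul_0_l, Nat.add_0_l. rewrite <- (Nat.mul_1_l (Nat.pow m n)) at 1. apply Nat.mul_le_mono_r. auto.
      * rewrite E. replace (k + S l')%nat with (S (l' + k)) by lia. simpl. rewrite Nat.pow_add_r.
        pose proof (pw_ge1 l'). pose proof (pw_ge1 k). set (a := (Nat.pow m l' * Nat.pow m k)%nat). assert (1 <= a)%nat by (unfold a; nia). apply Nat.le_trans with ((a + 1) * Nat.pow m n)%nat; [lia|]. apply Nat.mul_le_mono_r. nia.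
Qed.


Definition h1 (p : nat*nat) := INR (fst p) * indic (Nat.eqb (snd p) O).
Definition h0 (p : nat*nat) := indic (Nat.eqb (snd p) O).
Definition Gi (i : nat) (w : nat -> nat*nat) := INR (opc m n (fun s => snd (w s)) i) * Ia w.

Lemma snd_upd i (w : nat -> nat*nat) : snd (w i) = O -> (fun j => snd (upd i (0,0)%nat w j)) = (fun j => snd (w j)).
Proof. intros H. apply functional_extensionality; intros j. unfold upd. destruct (Nat.eqb_spec j i); subst; simpl; auto. Qed.

Lemma Gi_upd i (w : nat -> nat*nat) : snd (w i) = O -> Gi i (upd i (0,0)%nat w) = Gi i w.
Proof. intros H. unfold Gi, Ia, Nn. rewrite (snd_upd i w H). auto. Qed.

Lemma opc0 i (w : nat -> nat*nat) : (i < Nat.pow m n)%nat -> snd (w i) <> O -> opc m n (fun s => snd (w s)) i = O.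
Proof. intros Hi H. apply (opc_zero m Hm); auto. Qed.

Lemma decompW (w : nat -> nat*nat) : Ia w * INR (Wn w) = sum_R (Nat.pow m n) (fun i => h1 (w i) * Gi i (upd i (0,0)%nat w)).
Proof. unfold Wn. rewrite INR_sum, <- sum_R_scal. apply sum_R_ext. intros i Hi.
  unfold h1. destruct (Nat.eqb_spec (snd (w i)) 0) as [E|E].
  - rewrite Gi_upd by auto. unfold Gi. rewrite mult_INR. simpl. ring.
  - rewrite mult_INR, opc0 by auto. simpl. ring. Qed.

Lemma decompN (w : nat -> nat*nat) : Nf w = sum_R (Nat.pow m n) (fun i => h0 (w i) * Gi i (upd i (0,0)%nat w)).
Proof. unfold Nf. rewrite <- (Rmult_comm (Ia w)). unfold Nn at 1. rewrite (open_sum m Hm), INR_sum, <- sum_R_scal. apply sum_R_ext. intros i Hi.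
  unfold h0. destruct (Nat.eqb_spec (snd (w i)) 0) as [E|E].
  - rewrite Gi_upd by auto. unfold Gi. simpl. ring.
  - rewrite opc0 by auto. simpl. ring. Qed.

Lemma eta_eq K' : 0 < SS q K' ->
  PP q K' * texp q K' (Nat.pow m n) (fun u => Ia u * INR (Wn u)) =
  texp q K' 1 (fun w => INR (fst (w O) - snd (w O))) * texp q K' (Nat.pow m n) Nf.
Proof. intros HS.
  rewrite (H1_eq q qpos Hcoup).
  replace (fun u => Ia u * INR (Wn u)) with (fun u => sum_R (Nat.pow m n) (fun i => h1 (u i) * Gi i (upd i (0,0)%nat u)))
    by (apply functional_extensionality; intros; rewrite decompW; auto).
  replace Nf with (fun u => sum_R (Nat.pow m n) (fun i => h0 (u i) * Gi i (upd i (0,0)%nat u)))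
    by (apply functional_extensionality; intros; rewrite decompN; auto).
  rewrite !texp_sum, <- !sum_R_scal. apply sum_R_ext. intros i Hi.
  pose proof (texp_prod q K' (Nat.pow m n) i h1 (Gi i) Hi) as X1.
  pose proof (texp_prod q K' (Nat.pow m n) i h0 (Gi i) Hi) as X0.
  change (texp q K' 1 (fun w => h0 (w O))) with (PP q K') in X0.
  change (texp q K' 1 (fun w => INR (fst (w 0%nat)) * indic (snd (w 0%nat) =? 0)%nat)) with (texp q K' 1 (fun w => h1 (w O))).
  set (T1 := texp q K' 1 (fun w => h1 (w O))) in *.
  set (A := texp q K' (Nat.pow m n) (fun w => h1 (w i) * Gi i (upd i (0, 0)%nat w))) in *.
  set (B := texp q K' (Nat.pow m n) (fun w => h0 (w i) * Gi i (upd i (0, 0)%nat w))) in *.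
  apply Rmult_eq_reg_r with (SS q K'); [|apply Rgt_not_eq; lra].
  replace (PP q K' * A * SS q K') with (PP q K' * (A * SS q K')) by ring. rewrite X1.
  replace (T1 * B * SS q K') with (T1 * (B * SS q K')) by ring. rewrite X0. ring. Qed.


Definition lam := match l with O => 0 | S _ => eta / 2 end.

Lemma Ia_01 u : Ia u = 0 \/ (Ia u = 1 /\ r <= INR (Nn u)).
Proof. unfold Ia. destruct (Rle_dec r (INR (Nn u))); simpl.
  - destruct (rec_val m n (fun i => snd (u i)) =? k)%nat; simpl; [right; split; auto; ring|left; ring].
  - left; ring. Qed.

Lemma Ia_nonneg u : 0 <= Ia u.
Proof. destruct (Ia_01 u) as [E|[E _]]; rewrite E; lra. Qed.

Lemma Nf_nonneg u : 0 <= Nf u.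
Proof. unfold Nf. apply Rmult_le_pos; [apply pos_INR|apply Ia_nonneg]. Qed.

Lemma hf_nonneg u : 0 <= hf u.
Proof. unfold hf. destruct (andb _ _); simpl; lra. Qed.

Lemma IaW_nonneg u : 0 <= Ia u * INR (Wn u).
Proof. apply Rmult_le_pos; [apply Ia_nonneg|apply pos_INR]. Qed.

Lemma gf_bound K' : texp q K' (Nat.pow m n) (fun u => Ia u * INR (Wn u)) - lam * texp q K' (Nat.pow m n) Nf
   <= texp q K' (Nat.pow m n) gf.
Proof.
  replace gf with (fun u => Ia u * INR (Wn u) - Ia u * INR l) by (apply functional_extensionality; intros; unfold gf; ring).
  rewrite texp_minus. rewrite <- texp_scal. apply Rplus_le_compat_l. apply Ropp_le_contravar.
  apply (texp_mono q qpos). intros u. unfold lam, Nf.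
  destruct (Ia_01 u) as [E|[E E2]]; rewrite E.
  - rewrite !Rmult_0_r, Rmult_0_l. lra.
  - destruct l as [|l']. { simpl; lra. }
    rewrite Rmult_1_l, Rmult_1_r. apply Rle_trans with (r * eta / 2); auto. nra. Qed.

Lemma gf_pos_hf K' : 0 < texp q K' (Nat.pow m n) gf -> 0 < texp q K' (Nat.pow m n) hf.
Proof. intros H. apply (texp_pos q qpos K' _ gf); auto; [|apply hf_nonneg].
  intros u Hu. unfold gf in Hu. destruct (Ia_01 u) as [E|[E E2]]; rewrite E in Hu; [lra|].
  unfold Ia in E. unfold hf.
  destruct (Nat.eqb_spec (rec_val m n (fun i => snd (u i))) k); [|simpl in E; lra].
  destruct (Nat.leb_spec l (Wn u)); simpl; [lra|].
  apply lt_INR in H0. lra. Qed.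


Lemma lam_cases : (lam = 0 /\ forall K', slack_exp K' = 0) \/
  (lam = eta / 2 /\ l <> O /\ forall K', slack_exp K' =
     SS q K' ^ (Nat.pow m (n + k + l) - Nat.pow m n - Nat.pow m n) * texp q K' (Nat.pow m n) hf * texp q K' (Nat.pow m n) hf).
Proof. unfold lam, slack_exp. destruct l; [left|right]; auto. Qed.

Lemma pow_le1 x j : 0 <= x <= 1 -> x ^ j <= 1.
Proof. intros H. induction j; simpl; [lra|]. assert (0 <= x ^ j) by (apply pow_le; lra). nra. Qed.

Lemma SS_nonneg K : 0 <= SS q K.
Proof. unfold SS. apply texp_nonneg; auto. intros; lra. Qed.

Hypothesis Hcv : Un_cv (fun K => sum_R K (fun a => sum_R K (fun b => q a b))) 1.
Variable Kp : nat.
Hypothesis HKp : 0 < PP q Kp.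
Hypothesis HH : forall K2, exists K1, eta * PP q K2 <= texp q K1 1 (fun w => INR (fst (w O) - snd (w O))).

Lemma core K2 K1 K' : (Kp <= K2)%nat -> eta * PP q K2 <= texp q K1 1 (fun w => INR (fst (w O) - snd (w O))) ->
  (K2 <= K')%nat -> (K1 <= K')%nat ->
  eta * (PP q K2 / PP q K') * texp q K' (Nat.pow m n) Nf <= texp q K' (Nat.pow m n) (fun u => Ia u * INR (Wn u)).
Proof. intros H1 H2 H3 H4.
  assert (P' : 0 < PP q K') by (pose proof (PP_mono q qpos Kp K' ltac:(lia)); lra).
  assert (S' : 0 < SS q K') by (pose proof (PP_le_SS q qpos K'); lra).
  pose proof (eta_eq K' S') as E.
  assert (HM : texp q K1 1 (fun w => INR (fst (w O) - snd (w O))) <= texp q K' 1 (fun w => INR (fst (w O) - snd (w O))))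
    by (apply texp_Kmono; auto; intros; apply pos_INR).
  assert (EN : 0 <= texp q K' (Nat.pow m n) Nf) by (apply texp_nonneg; auto; apply Nf_nonneg).
  apply (Rmult_le_reg_l (PP q K')); auto. rewrite E.
  replace (PP q K' * (eta * (PP q K2 / PP q K') * texp q K' (Nat.pow m n) Nf)) with (eta * PP q K2 * texp q K' (Nat.pow m n) Nf)
    by (field; lra).
  apply Rmult_le_compat_r; auto. lra. Qed.

Lemma final_main K : exists K',
  INR m ^ (k + l) * eta / 2 * texp q K (Nat.pow m n) Nf <=
  texp q K' (Nat.pow m (n + k + l)) (fun w => INR (rec_val m (n + k + l) (fun i => fst (w i)))).
Proof.
  set (E := texp q K (Nat.pow m n) Nf).
  set (Bm := INR m ^ (k + l)).
  set (P1 := (Nat.pow m (n + k + l) - Nat.pow m n)%nat).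
  set (RHS := fun K' => texp q K' (Nat.pow m (n + k + l)) (fun w => INR (rec_val m (n + k + l) (fun i => fst (w i))))).
  change (exists K', Bm * eta / 2 * E <= RHS K').
  assert (HE : 0 <= E) by (apply texp_nonneg; auto; apply Nf_nonneg).
  assert (HB : 0 <= Bm) by (apply pow_le; apply pos_INR).
  assert (RHSnn : forall K', 0 <= RHS K') by (intros; apply texp_nonneg; auto; intros; apply pos_INR).
  assert (ENmono : forall K', (K <= K')%nat -> E <= texp q K' (Nat.pow m n) Nf) by (intros; apply texp_Kmono; auto; apply Nf_nonneg).
  destruct (Rle_lt_dec E 0) as [E0|Epos].
  { exists K. assert (E = 0) by lra. rewrite H. pose proof (RHSnn K). lra. }
  assert (GEN : forall K2 K1 K', (Kp <= K2)%nat -> eta * PP q K2 <= texp q K1 1 (fun w => INR (fst (w O) - snd (w O))) ->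
     (K2 <= K')%nat -> (K1 <= K')%nat ->
     Bm * SS q K' ^ P1 * (eta * (PP q K2 / PP q K') * texp q K' (Nat.pow m n) Nf - lam * texp q K' (Nat.pow m n) Nf) + slack_exp K' <= RHS K').
  { intros K2 K1 K' H1 H2 H3 H4. pose proof (core K2 K1 K' H1 H2 H3 H4) as C. pose proof (gf_bound K') as G.
    pose proof (RHS_bound K') as R1. fold Bm P1 in R1. unfold RHS.
    assert (0 <= SS q K' ^ P1) by (apply pow_le; apply SS_nonneg).
    eapply Rle_trans; [|exact R1]. apply Rplus_le_compat_r. apply Rmult_le_compat_l; [apply Rmult_le_pos; auto|]. lra. }
  assert (RHO : forall K2 K', (K2 <= K')%nat -> (Kp <= K2)%nat -> 0 <= PP q K2 / PP q K' <= 1).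
  { intros K2 K' H1 H2. pose proof (PP_mono q qpos Kp K2 H2). pose proof (PP_mono q qpos K2 K' H1).
    split. unfold Rdiv. apply Rmult_le_pos; [lra|]. apply Rlt_le, Rinv_0_lt_compat; lra. apply (Rmult_le_reg_r (PP q K')); [lra|]. unfold Rdiv. rewrite Rmult_assoc, Rinv_l by lra. lra. }
  assert (S1b : forall K', 0 <= SS q K' ^ P1 <= 1) by (intros; split; [apply pow_le; apply SS_nonneg| apply pow_le1; split; [apply SS_nonneg|apply (SS_le1 q qpos Hcv)]]).
  destruct lam_cases as [[L0 SL0]|[L1 [Ln0 SL1]]].
  - destruct (theta_lemma q qpos Hcv P1 Kp (1/2) HKp ltac:(lra)) as [K2 [HK2 HT]].
    destruct (HH K2) as [K1 HK1].
    set (K' := Nat.max (Nat.max K2 K1) K). exists K'.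
    pose proof (GEN K2 K1 K' HK2 HK1 ltac:(unfold K'; lia) ltac:(unfold K'; lia)) as G.
    rewrite L0, SL0 in G. pose proof (HT K' ltac:(unfold K'; lia)) as T.
    pose proof (ENmono K' ltac:(unfold K'; lia)) as EM. pose proof (RHO K2 K' ltac:(unfold K'; lia) HK2) as RH. pose proof (S1b K') as SB.
    set (S1 := SS q K' ^ P1) in *. set (rho := PP q K2 / PP q K') in *. set (EN' := texp q K' (Nat.pow m n) Nf) in *.
    assert (A : (1/2) * E <= (S1 * rho) * EN') by (apply Rmult_le_compat; lra).
    assert (A2 : eta * ((1/2) * E) <= eta * ((S1 * rho) * EN')) by (apply Rmult_le_compat_l; lra).
    assert (A3 : Bm * (eta * ((1/2) * E)) <= Bm * (eta * ((S1 * rho) * EN'))) by (apply Rmult_le_compat_l; lra).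
    replace (Bm * eta / 2 * E) with (Bm * (eta * ((1/2) * E))) by field.
    eapply Rle_trans; [exact A3|]. eapply Rle_trans; [|exact G]. right. ring.
  -
    destruct (theta_lemma q qpos Hcv P1 Kp (3/4) HKp ltac:(lra)) as [K2a [HK2a HTa]].
    destruct (HH K2a) as [K1a HK1a].
    set (K3 := Nat.max (Nat.max K2a K1a) K).
    assert (Hd : 0 < texp q K3 (Nat.pow m n) hf).
    { apply gf_pos_hf.
      pose proof (core K2a K1a K3 HK2a HK1a ltac:(unfold K3; lia) ltac:(unfold K3; lia)) as C.
      pose proof (gf_bound K3) as G. rewrite L1 in G.
      pose proof (HTa K3 ltac:(unfold K3; lia)) as T.
      pose proof (ENmono K3 ltac:(unfold K3; lia)) as EM. pose proof (RHO K2a K3 ltac:(unfold K3; lia) HK2a) as RH. pose proof (S1b K3) as SB.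
      set (S1 := SS q K3 ^ P1) in *. set (rho := PP q K2a / PP q K3) in *. set (EN' := texp q K3 (Nat.pow m n) Nf) in *.
      assert (rho >= 3/4) by nra.
      assert (0 <= (rho - 3/4) * (eta * EN')) by (apply Rmult_le_pos; [lra| apply Rmult_le_pos; lra]).
      assert (eta * (1/4) * EN' <= eta * rho * EN' - eta / 2 * EN') by lra.
      assert (0 < eta * (1/4) * EN') by (apply Rmult_lt_0_compat; lra).
      lra. }
    set (delta := texp q K3 (Nat.pow m n) hf) in *.
    set (X := Bm * eta * E).
    assert (HX : 0 <= X) by (unfold X; apply Rmult_le_pos; [apply Rmult_le_pos|]; lra).
    assert (Hd2 : 0 < delta * delta) by nra.
    set (th := Rmax (1/2) (X / (X + delta * delta))).
    assert (Hth : 0 <= th < 1).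
    { unfold th. split. apply Rle_trans with (1/2); [lra| apply Rmax_l].
      apply Rmax_lub_lt; [lra|]. apply (Rmult_lt_reg_r (X + delta * delta)); [lra|]. unfold Rdiv. rewrite Rmult_assoc, Rinv_l by lra. lra. }
    assert (Hth2 : X <= th * (X + delta * delta)).
    { apply Rle_trans with (X / (X + delta * delta) * (X + delta * delta)).
      - right. field. lra.
      - apply Rmult_le_compat_r; [lra|]. apply Rmax_r. }
    assert (Hth3 : 1/2 <= th) by apply Rmax_l.
    destruct (theta_lemma q qpos Hcv P1 Kp th HKp Hth) as [K2 [HK2 HT]].
    destruct (HH K2) as [K1 HK1].
    set (K' := Nat.max (Nat.max K2 K1) K3). exists K'.
    pose proof (GEN K2 K1 K' HK2 HK1 ltac:(unfold K'; lia) ltac:(unfold K'; lia)) as G.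
    rewrite L1, SL1 in G. pose proof (HT K' ltac:(unfold K'; lia)) as T.
    assert (EM : E <= texp q K' (Nat.pow m n) Nf) by (apply ENmono; unfold K', K3; lia).
    pose proof (RHO K2 K' ltac:(unfold K'; lia) HK2) as RH. pose proof (S1b K') as SB.
    assert (DM : delta <= texp q K' (Nat.pow m n) hf) by (apply texp_Kmono; auto; [unfold K'; lia|apply hf_nonneg]).
    assert (S12 : SS q K' ^ P1 <= SS q K' ^ (Nat.pow m (n + k + l) - Nat.pow m n - Nat.pow m n)).
    { assert (EP : P1 = ((Nat.pow m (n + k + l) - Nat.pow m n - Nat.pow m n) + Nat.pow m n)%nat).
      { unfold P1. assert (Nat.pow m n + Nat.pow m n <= Nat.pow m (n + k + l))%nat.
        { replace (n + k + l)%nat with (n + (k + l))%nat by lia. rewrite Nat.pow_add_r.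
          assert (2 <= Nat.pow m (k + l))%nat.
          { replace (k + l)%nat with (S (k + l - 1)) by lia. simpl. pose proof (pw_ge1 (k + l - 1)). nia. }
          nia. }
        lia. }
      rewrite EP, pow_add. assert (0 <= SS q K' ^ Nat.pow m n <= 1) by (split; [apply pow_le; apply SS_nonneg| apply pow_le1; split; [apply SS_nonneg|apply (SS_le1 q qpos Hcv)]]).
      assert (0 <= SS q K' ^ (Nat.pow m (n + k + l) - Nat.pow m n - Nat.pow m n)) by (apply pow_le; apply SS_nonneg). nra. }
    set (S1 := SS q K' ^ P1) in *. set (S2 := SS q K' ^ (Nat.pow m (n + k + l) - Nat.pow m n - Nat.pow m n)) in *.
    set (rho := PP q K2 / PP q K') in *. set (EN' := texp q K' (Nat.pow m n) Nf) in *.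
    set (D' := texp q K' (Nat.pow m n) hf) in *. clearbody S1 S2 rho EN' D' Bm.
    assert (th_le_S2 : S1 * rho <= S2) by nra.
    assert (B1 : (S1 * rho - 1/2) * E <= (S1 * rho - S1 / 2) * EN') by (apply Rmult_le_compat; nra).
    assert (B2 : Bm * (eta * ((S1 * rho - 1/2) * E)) <= Bm * S1 * (eta * rho * EN' - eta / 2 * EN')).
    { replace (Bm * S1 * (eta * rho * EN' - eta / 2 * EN')) with (Bm * (eta * ((S1 * rho - S1 / 2) * EN'))) by field.
      apply Rmult_le_compat_l; auto. apply Rmult_le_compat_l; lra. }
    assert (B3 : (S1 * rho) * (delta * delta) <= S2 * D' * D').
    { assert (0 <= delta) by lra. assert (delta * delta <= D' * D') by nra.
      assert (0 <= S1 * rho) by nra. nra. }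
    assert (B4 : X <= (S1 * rho) * (X + delta * delta)) by nra.
    assert (B5 : Bm * (eta * ((S1 * rho - 1/2) * E)) = (S1 * rho) * (Bm * eta * E) - (Bm * eta * E) / 2) by (clear - Bm eta S1 rho E; field).
    replace (Bm * eta / 2 * E) with ((Bm * eta * E) / 2) by (clear - Bm eta E; field).
    change (Bm * eta * E) with X in B5 |- *.
    lra.
Qed.

End Main.

Open Scope R_scope.
Open Scope R_scope.

Theorem theorem4p2 (m : nat) (q : nat -> nat -> R) (eta : R) :
  (2 <= m)%nat ->
  is_pmf q ->
  XY_coupling q ->
  (* P(X0 = k) >= P(Y0 = k) for k >= 1 *)
  (forall k : nat, (1 <= k)%nat ->
     exp_le q 1 (fun w => indic (Nat.eqb (snd (w O)) k))
             1 (fun w => indic (Nat.eqb (fst (w O)) k))) ->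
  (* P(Y0 = 0) > 0 *)
  (exists K, 0 < texp q K 1 (fun w => indic (Nat.eqb (snd (w O)) O))) ->
  0 < eta ->
  (* E(X0) < oo *)
  (exists M, forall K, texp q K 1 (fun w => INR (fst (w O))) <= M) ->
  (* E(X0 - Y0) >= eta P(Y0 = 0) *)
  exp_le q 1 (fun w => eta * indic (Nat.eqb (snd (w O)) O))
         1 (fun w => INR (fst (w O) - snd (w O))) ->
  forall (r : R) (n k l : nat),
    0 <= r -> INR l <= r * eta / 2 ->
    exp_le q (Nat.pow m n)
      (fun w =>
         let N := open_count m n (fun i => snd (w i)) in
         (INR m ^ (k + l) * eta / 2) *
         (INR N * indic (if Rle_dec r (INR N) then true else false)
                * indic (Nat.eqb (rec_val m n (fun i => snd (w i))) k)))
      (Nat.pow m (n + k + l))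
      (fun w => INR (rec_val m (n + k + l) (fun i => fst (w i)))).
Proof.
  intros Hm Hpmf Hcoup _ [Kp HKp] Heta _ HH r n k l Hr Hl.
  destruct Hpmf as [qpos Hcv].
  assert (HH' : forall K2, exists K1, eta * PP q K2 <= texp q K1 1 (fun w => INR (fst (w O) - snd (w O)))).
  { intros K2. destruct (HH K2) as [K1 HK1]. exists K1. unfold PP. rewrite <- texp_scal. exact HK1. }
  intros K. destruct (final_main m Hm q qpos Hcoup eta r n k l Heta Hl Hcv Kp HKp HH' K) as [K' HK'].
  exists K'. eapply Rle_trans; [|exact HK'].
  right. rewrite <- texp_scal. f_equal. apply functional_extensionality; intros w.
  unfold Nf, Ia, Nn. cbv zeta. field.
Qed.
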